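(* Let $(T,\mathsf{T})$ be a measurable space, $(X,d)$ a complete separable metric space, and let $f:T\to X$ and $\rho:T\to[0,\infty)$ be measurable. Let $\phi:X\times X\to[0,\infty)$ be a Carath\'eodory distance. Then the set-valued map $t\mapsto\overline{B}^\phi_{\rho(t)}(f(t))$ is graph measurable.
   Context: A Carath\'eodory distance is a function $\phi:X\times X\to[0,\infty)$ continuous in its left argument and Borel measurable in its right argument. $\overline{B}^\phi_r(x):=\{y\in X\mid\phi(y,x)\le r\}$. A set-valued map $\varphi:T\to2^X$ is graph measurable if $\{(t,x)\mid x\in\varphi(t)\}\in\mathsf{T}\otimes\mathsf{B}(X)$. *)

(* Defs.v *)
From HB Require Import structures.
From mathcomp Require Import all_boot all_order all_algebra.
From mathcomp Require Import all_classical all_reals all_analysis.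
Set Implicit Arguments. Unset Strict Implicit. Unset Printing Implicit Defensive.
Import Order.TTheory GRing.Theory Num.Theory.
Import numFieldTopology.Exports.
Local Open Scope classical_set_scope.
Local Open Scope ring_scope.

Definition borel_set (X : topologicalType) : set (set X) := <<s @open X >>.

Definition borel_measurable_fun (d : measure_display) (T : measurableType d)
  (X : topologicalType) (f : T -> X) : Prop :=
  forall B : set X, borel_set B -> measurable (f @^-1` B).

Definition prod_borel_measurable (d : measure_display) (T : measurableType d)
  (X : topologicalType) : set (set (T * X)) :=
  <<s [set C | exists A B, [/\ measurable A, borel_set B & C = A `*` B]] >>.

Definition cball_phi (X : Type) (R : realType) (phi : X -> X -> R) (r : R) (x : X)
  : set X := [set y | phi y x <= r].

Definition caratheodory_distance (R : realType) (X : topologicalType)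
  (phi : X -> X -> R) : Prop :=
  [/\ (forall x y, 0 <= phi x y),
      (forall y, continuous (fun x => phi x y)) &
      (forall x (B : set R), measurable B -> borel_set (phi x @^-1` B))].

Definition graph_measurable (d : measure_display) (T : measurableType d)
  (X : topologicalType) (Phi : T -> set X) : Prop :=
  prod_borel_measurable [set tx : T * X | Phi tx.1 tx.2].

(* Main.v *)
Require Import Defs.
From HB Require Import structures.
From mathcomp Require Import all_boot all_order all_algebra.
From mathcomp Require Import all_classical all_reals all_analysis.
From mathcomp Require Import lra.
Import Order.TTheory GRing.Theory Num.Theory.
Import numFieldTopology.Exports.
Local Open Scope classical_set_scope.
Local Open Scope ring_scope.

Lemma natinv_lt (R : realType) (c : R) : 0 < c -> exists n : nat, n.+1%:R^-1 < c.
Proof.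
move=> c0; have [N _ HN] := near_infty_natSinv_lt (PosNum c0).
by exists N; apply: HN => /=.
Qed.

Lemma aux_ineq (R : realType) (k a b c : R) :
  k < (a - b)/2 -> c < b + k -> a - (a-b)/2 < c -> False.
Proof. move=> h1 h2 h3; lra. Qed.

Lemma cont_ball (R : realType) (X : metricType R) (psi : X -> R)
  (psic : continuous psi) (x : X) (c : R) : 0 < c ->
  exists2 de, 0 < de & forall z, ball x de z -> `|psi x - psi z| < c.
Proof.
move=> c0; have := cvgr_dist_lt _ _ (psic x) _ c0.
move=> H; have := (nbhs_ballP _ _).1 (H (nbhs_filter x)).
by move=> [de /= de0 Hde]; exists de.
Qed.

Lemma charac (R : realType) (X : metricType R) (psi : X -> R)
  (psic : continuous psi) (e : nat -> X)
  (dense_e : forall O : set X, O !=set0 -> open O -> exists m, O (e m))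
  (x : X) (r : R) :
  psi x <= r <->
  forall n : nat, exists m : nat, psi (e m) < r + n.+1%:R^-1 /\
     (ball (e m) n.+1%:R^-1)° x.
Proof.
split.
- move=> hx n.
  set rn : R := n.+1%:R^-1.
  have rn0 : 0 < rn by rewrite /rn invr_gt0 ltr0n.
  have [de de0 Hde] := @cont_ball _ _ _ psic x _ rn0.
  have eta0 : 0 < Num.min de (rn / 2) by rewrite lt_min de0 divr_gt0.
  have [m] := dense_e _ (ex_intro _ x (open_nbhs_ball x (PosNum eta0)).2)
     (open_nbhs_ball x (PosNum eta0)).1.
  move=> /interior_subset /= bxm.
  have h1 : Num.min de (rn/2) <= de by rewrite ge_min lexx.
  have h2 : Num.min de (rn/2) <= rn/2 by rewrite ge_min lexx orbT.
  exists m; split.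
    have := Hde _ (le_ball h1 bxm) ; rewrite ltr_distlC => /andP[_ h]. lra.
  apply: filterS (nbhsx_ballx x (rn/2) _); last by rewrite divr_gt0.
  move=> z bz.
  have := ball_triangle (ball_sym (le_ball h2 bxm)) bz.
  by rewrite -splitr.
- move=> H; rewrite leNgt; apply/negP => hlt.
  have eps0 : 0 < (psi x - r) / 2 by rewrite divr_gt0 // subr_gt0.
  have [de de0 Hde] := @cont_ball _ _ _ psic x _ eps0.
  have mn0 : 0 < Num.min de ((psi x - r) / 2) by rewrite lt_min de0 eps0.
  have [n hn] := @natinv_lt _ _ mn0.
  have [m [h1 h2]] := H n.
  move: hn; rewrite lt_min => /andP[hn1 hn2].
  have := Hde _ (le_ball (ltW hn1) (ball_sym (interior_subset h2))).
  move; rewrite ltr_distlC => /andP[h _].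
  exact: (@aux_ineq _ _ _ _ _ hn2 h1 h).
Qed.

Theorem lemma2p9 (R : realType) (d : measure_display) (T : measurableType d)
  (X : metricType R)
  (X_complete : forall F : set_system X, ProperFilter F -> cauchy F -> exists x : X, F --> x)
  (X_separable : exists D : set X, countable D /\ dense D)
  (f : T -> X) (rho : T -> R) (phi : X -> X -> R)
  (f_meas : borel_measurable_fun f)
  (rho_meas : measurable_fun setT rho) (rho_ge0 : forall t, 0 <= rho t)
  (phi_car : caratheodory_distance phi) :
  graph_measurable (fun t : T => cball_phi phi (rho t) (f t)).
Proof.
rewrite /graph_measurable /prod_borel_measurable.
case: phi_car => phi0 phic phim.
have [[x0 _]|nX] := pselect (exists x : X, True); last first.
  have -> : [set tx : T * X | cball_phi phi (rho tx.1) (f tx.1) tx.2] = set0.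
    by apply/seteqP; split => -[t x] //= _; case: nX; exists x.
  exact: sigma_algebra0.
case: X_separable => D [Dc Dd].
have [g ginj] := countable_injP _ Dc.
pose e := 'pinv_(fun=> x0) D g.
have dense_e : forall O : set X, O !=set0 -> open O -> exists m, O (e m).
  move=> O O0 Oo; have [q [Oq Dq]] := Dd O O0 Oo.
  by exists (g q); rewrite /e pinvKV // inE.
pose rn (n : nat) : R := n.+1%:R^-1.
pose A n m := [set t | phi (e m) (f t) < rho t + rn n].
have mA : forall n m, measurable (A n m).
  move=> n m.
  have mh : measurable_fun setT (fun t => phi (e m) (f t)).
    by move=> _ Y mY; rewrite setTI; exact: f_meas _ (phim _ _ mY).
  have := measurable_realfun.measurable_funB mh rho_meas measurableT (measurable_itv `]-oo, rn n[).
  rewrite setTI; congr measurable.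
  by apply/seteqP; split => t /=; rewrite in_itv /= ltrBlDr addrC.
have hE : [set tx : T * X | cball_phi phi (rho tx.1) (f tx.1) tx.2] =
    \bigcap_n \bigcup_m (A n m `*` (ball (e m) (rn n))°).
  apply/seteqP; split => -[t x] /=.
    move=> /(@charac _ _ _ (phic (f t)) e dense_e x (rho t)) H n _.
    by have [m [h1 h2]] := H n; exists m.
  move=> H; apply/(@charac _ _ _ (phic (f t)) e dense_e x (rho t)) => n.
  by have [m _ [h1 h2]] := H n I; exists m.
rewrite hE -[Z in _ Z]setCK setC_bigcap -setTD.
apply: sigma_algebraCD; apply: sigma_algebra_bigcup => n.
rewrite -setTD; apply: sigma_algebraCD; apply: sigma_algebra_bigcup => m.
apply: sub_sigma_algebra; exists (A n m), (ball (e m) (rn n))°; split => //.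
rewrite /borel_set; apply: sub_sigma_algebra; exact: open_interior.
Qed.
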